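(* Let $N\ge2$, $d\ge1$ and consider the system $$\dot x_i(t)=\frac{\lambda_i(x)}{N}\sum_{j=1}^N M_{ij}(t)\,\phi_{ij}(x_i,x_j)\,(x_j(t)-x_i(t)),\qquad i=1,\dots,N,$$ with $x_i\in\mathbb{R}^d$, where all $M_{ij}:[0,+\infty)\to[0,1]$ are Lebesgue measurable and $\lambda_i:\mathbb{R}^{Nd}\to\mathbb{R}^+$, $\phi_{ij}:\mathbb{R}^d\times\mathbb{R}^d\to\mathbb{R}^+$ are Lipschitz continuous and strictly positive. Let $x(t)$ be a (Carathéodory) solution and let $\underline m,\overline m$ be the minimum and maximum of $\lambda_i(y)\phi_{ij}(y_i,y_j)$ over all $i,j\in\{1,\dots,N\}$ and all $y\in\mathbb{R}^{Nd}$ with $|y_k|\le\max_l|x_l(0)|$ for every $k$. Assume the Persistent Excitation condition holds with parameters $(T,\mu)$, $T,\mu>0$: for all indices $i,j$ and all $t\ge0$, $\frac1T\int_t^{t+T}M_{ij}(s)\,ds\ge\mu$. Then for all $n\in\mathbb{N}$, $$\max_{i,j}|x_i(nT)-x_j(nT)|\le C^n\max_{i,j}|x_i(0)-x_j(0)|,\qquad C=1-\frac12\left(\frac{\underline m\mu T}{N+\underline m\mu T}\right)\exp\!\left(-2\tfrac{N-1}{N}T\overline m\right).$$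
   Context: $|\cdot|$ is the Euclidean norm; $\mathbb{N}$ includes $0$. *)

(* Defs.v *)
From HB Require Import structures.
From mathcomp Require Import all_boot all_order all_algebra.
From mathcomp Require Import all_classical all_reals all_analysis.
Set Implicit Arguments. Unset Strict Implicit. Unset Printing Implicit Defensive.
Import Order.TTheory GRing.Theory Num.Theory.
Import numFieldNormedType.Exports.
Local Open Scope classical_set_scope.
Local Open Scope ring_scope.

Definition enorm (R : realType) (d : nat) (v : 'rV[R]_d) : R :=
  Num.sqrt (\sum_(k < d) v ord0 k ^+ 2).

Definition config (R : realType) (N d : nat) := 'I_N -> 'rV[R]_d.

Definition cnorm (R : realType) (N d : nat) (y : config R N d) : R :=
  Num.sqrt (\sum_(i < N) \sum_(k < d) y i ord0 k ^+ 2).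

Definition lipschitz_config (R : realType) (N d : nat) (f : config R N d -> R) :=
  exists L : R, forall y z : config R N d,
    `|f y - f z| <= L * cnorm (fun i => y i - z i).

Definition lipschitz_pair (R : realType) (d : nat) (f : 'rV[R]_d -> 'rV[R]_d -> R) :=
  exists L : R, forall a b a' b' : 'rV[R]_d,
    `|f a b - f a' b'| <= L * Num.sqrt (enorm (a - a') ^+ 2 + enorm (b - b') ^+ 2).

Definition rhs (R : realType) (N d : nat) (lam : 'I_N -> config R N d -> R)
  (phi : 'I_N -> 'I_N -> 'rV[R]_d -> 'rV[R]_d -> R) (M : 'I_N -> 'I_N -> R -> R)
  (x : R -> config R N d) (i : 'I_N) (k : 'I_d) (s : R) : R :=
  lam i (x s) / N%:R *
    \sum_(j < N) M i j s * phi i j (x s i) (x s j) * (x s j ord0 k - x s i ord0 k).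

Definition caratheodory_solution (R : realType) (N d : nat)
  (lam : 'I_N -> config R N d -> R) (phi : 'I_N -> 'I_N -> 'rV[R]_d -> 'rV[R]_d -> R)
  (M : 'I_N -> 'I_N -> R -> R) (x : R -> config R N d) : Prop :=
  forall (t : R), 0 <= t -> forall (i : 'I_N) (k : 'I_d),
    (lebesgue_measure : measure _ R).-integrable `[0, t] (EFin \o rhs lam phi M x i k) /\
    x t i ord0 k = x 0 i ord0 k + Rintegral lebesgue_measure `[0, t] (rhs lam phi M x i k).

Definition config_diam (R : realType) (N d : nat) (y : config R N d) : R :=
  \big[Num.max/0]_(i < N) \big[Num.max/0]_(j < N) enorm (y i - y j).

Definition config_radius (R : realType) (N d : nat) (y : config R N d) : R :=
  \big[Num.max/0]_(l < N) enorm (y l).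

(* Main.v *)
Require Import Defs.
From HB Require Import structures.
From mathcomp Require Import all_boot all_order all_algebra.
From mathcomp Require Import all_classical all_reals all_analysis.
From mathcomp Require Import lra ring.
Import Order.TTheory GRing.Theory Num.Theory.
Import numFieldNormedType.Exports.
Local Open Scope classical_set_scope.
Local Open Scope ring_scope.
Set Implicit Arguments. Unset Strict Implicit.

Section S.
Context {R : realType}.
Notation mu := (@lebesgue_measure R).

Lemma derivable_expM (c x : R) : derivable (fun s => expR (c * s)) x 1.
Proof.
have -> : (fun s => expR (c * s)) = expR \o ( *%R c) by [].
apply/derivable1_diffP; apply: differentiable_comp.
  apply/derivable1_diffP.
  have -> : ( *%R c) = (c *: id) by apply/funext => y /=.
  exact: derivableZ.
by apply/derivable1_diffP; exact: derivable_expR.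
Qed.

Lemma derivable_Mc (c x : R) : derivable ( *%R c) x 1.
Proof.
have -> : ( *%R c) = (c *: id) by apply/funext => y /=.
exact: derivableZ.
Qed.

Lemma derive_Mc (c x : R) : 'D_1 ( *%R c) x = c.
Proof.
have -> : ( *%R c) = (c *: id) by apply/funext => y /=.
rewrite deriveZ //= derive_id /=; exact: mulr1.
Qed.

Lemma derive_expM (c x : R) : derive1 (fun s => expR (c * s)) x = c * expR (c * x).
Proof.
have -> : (fun s => expR (c * s)) = expR \o ( *%R c) by [].
rewrite derive1_comp.
- rewrite !derive1E derive_Mc mulrC.
  congr (_ * _); exact: derive_val.
- exact: derivable_Mc.
- exact: derivable_expR.
Qed.

Lemma cont_expM (c : R) : continuous (fun s : R => expR (c * s)).
Proof.
move=> y; apply: continuous_comp; last exact: continuous_expR.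
by apply: cvgM; [exact: cvg_cst | exact: cvg_id].
Qed.

Lemma cont_cexpM (c : R) : continuous (fun s : R => c * expR (c * s)).
Proof.
by move=> y; apply: cvgM; [exact: cvg_cst | exact: cont_expM].
Qed.

Lemma int_expM (c a b : R) : a <= b ->
  \int[mu]_(s in `[a, b]) (c * expR (c * s)) = expR (c * b) - expR (c * a).
Proof.
rewrite le_eqVlt => /predU1P[->|ab].
  by rewrite set_itv1 Rintegral_set1 subrr.
rewrite /Rintegral (@continuous_FTC2 _ _ (fun s => expR (c * s))) //.
- apply: continuous_subspaceT => y; exact: cont_cexpM.
- split.
  + by move=> y _; exact: derivable_expM.
  + apply: cvg_at_right_filter; exact: cont_expM.
  + apply: cvg_at_left_filter; exact: cont_expM.
- by move=> y _; rewrite derive_expM.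
Qed.
Lemma last_time (e : R -> R) (a t : R) : a <= t ->
  {within `[a, t], continuous e} -> 0 <= e a -> e t < 0 ->
  exists s0, [/\ a <= s0, s0 < t, 0 <= e s0 &
    forall s, s0 < s -> s <= t -> e s < 0].
Proof.
move=> at0 ce ea et.
pose S := [set s | a <= s <= t /\ 0 <= e s].
have Sa : S a by split => //; rewrite lexx at0.
have ubt : ubound S t by move=> s [/andP[]].
have hS : has_sup S by split; [exists a | exists t].
have as0 : a <= sup S by exact: sup_upper_bound.
have s0t : sup S <= t by apply: ge_sup => //; exists a.
have es0 : 0 <= e (sup S).
  rewrite leNgt; apply/negP => es0.
  have /subspace_continuousP /(_ (sup S)) : {within `[a, t], continuous e} by [].
  have hin : [set` `[a, t]] (sup S) by rewrite /= in_itv /= as0 s0t.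
  move=> /(_ hin) /cvgrPdist_lt /(_ (- e (sup S))).
  rewrite oppr_gt0 => /(_ es0).
  rewrite near_withinE => /nbhs_ballP [del del0 hdel].
  have [s Ss hs] := sup_adherent del0 hS.
  have ss0 : s <= sup S by exact: sup_upper_bound.
  have : ball (sup S) del s.
    rewrite /ball /= ger0_norm ?subr_ge0 //.
    by rewrite ltrBlDr addrC -ltrBlDr.
  case: Ss => /andP[hsa hst] es.
  have hin2 : [set` `[a, t]] s by rewrite /= in_itv /= hsa hst.
  move=> /hdel /(_ hin2) h.
  have : e s - e (sup S) <= `|e (sup S) - e s| by rewrite distrC ler_norm.
  have h2 : `|e (sup S) - e s| < - e (sup S) := h.
  move: h2 es es0; lra.
exists (sup S); split => //.
  by rewrite lt_neqAle s0t andbT; apply/eqP => h; move: es0; rewrite h; lra.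
move=> s ss st; rewrite ltNge; apply/negP => es.
have : s <= sup S by apply: sup_upper_bound => //; split => //; rewrite st (le_trans as0 (ltW ss)).
by rewrite leNgt ss.
Qed.
Definition Intg (a b : R) (f : R -> R) := mu.-integrable `[a, b] (EFin \o f).
Definition Int (a b : R) (f : R -> R) := \int[mu]_(s in `[a, b]) f s.

Lemma IntgS a b a' b' f : a <= a' -> b' <= b -> Intg a b f -> Intg a' b' f.
Proof.
move=> aa bb; apply: integrableS => //.
by apply: subset_itv; rewrite bnd_simp.
Qed.

Lemma IntgD a b f g : Intg a b f -> Intg a b g -> Intg a b (fun s => f s + g s).
Proof.
move=> hf hg; have := integrableD _ hf hg => //.
by apply => //.
Qed.

Lemma IntgB a b f g : Intg a b f -> Intg a b g -> Intg a b (fun s => f s - g s).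
Proof.
move=> hf hg; have := integrableB _ hf hg.
by apply.
Qed.

Lemma IntgZ a b k f : Intg a b f -> Intg a b (fun s => k * f s).
Proof.
move=> hf; have := integrableZl _ k hf.
by apply.
Qed.

Lemma IntgN a b f : Intg a b f -> Intg a b (fun s => - f s).
Proof.
move=> hf; have := @IntgZ _ _ (-1) _ hf.
by apply: eq_integrable => // s _ /=; rewrite mulN1r.
Qed.

Lemma Intg_cont a b f : continuous f -> Intg a b f.
Proof.
move=> cf; apply: continuous_compact_integrable; first exact: segment_compact.
exact: continuous_subspaceT.
Qed.

Lemma Int_split a b c f : a <= b -> b <= c -> Intg a c f ->
  Int a c f - Int a b f = Int b c f.
Proof.
move=> ab bc hf; rewrite /Int (@Rintegral_itvB _ f (BLeft a) (BRight c) b) // ?bnd_simp //.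
rewrite Rintegral_itv_obnd_cbnd //.
by apply: integrableS hf => //; apply: subset_itv; rewrite ?bnd_simp.
Qed.

Lemma Int_oc a b f : Intg a b f ->
  \int[mu]_(s in `]a, b]) f s = Int a b f.
Proof.
move=> hf; rewrite Rintegral_itv_obnd_cbnd //.
by apply: integrableS hf => //; apply: subset_itv; rewrite ?bnd_simp.
Qed.

Lemma Int_le a b f g : Intg a b f -> Intg a b g ->
  (forall s, a < s <= b -> f s <= g s) -> Int a b f <= Int a b g.
Proof.
move=> hf hg fg; rewrite -!Int_oc //.
have hf' : mu.-integrable `]a, b] (EFin \o f).
  by apply: integrableS hf => //; apply: subset_itv; rewrite ?bnd_simp.
have hg' : mu.-integrable `]a, b] (EFin \o g).
  by apply: integrableS hg => //; apply: subset_itv; rewrite ?bnd_simp.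
by apply: le_Rintegral => // s; rewrite /= in_itv /= => /fg.
Qed.

Lemma Int_ge0 a b f : (forall s, a <= s <= b -> 0 <= f s) -> 0 <= Int a b f.
Proof.
move=> h; apply: Rintegral_ge0 => s; rewrite /= in_itv /=; exact: h.
Qed.

Lemma Int0 a f : Int a a f = 0.
Proof. by rewrite /Int set_itv1 Rintegral_set1. Qed.

Lemma IntD a b f g : Intg a b f -> Intg a b g -> Int a b (fun s => f s + g s) = Int a b f + Int a b g.
Proof. by move=> hf hg; rewrite /Int RintegralD. Qed.

Lemma IntB a b f g : Intg a b f -> Intg a b g -> Int a b (fun s => f s - g s) = Int a b f - Int a b g.
Proof. by move=> hf hg; rewrite /Int RintegralB. Qed.

Lemma IntZ a b k f : Intg a b f -> Int a b (fun s => k * f s) = k * Int a b f.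
Proof. by move=> hf; rewrite /Int RintegralZl. Qed.

Lemma IntN a b f : Intg a b f -> Int a b (fun s => - f s) = - Int a b f.
Proof.
move=> hf; rewrite -mulN1r -IntZ //; apply: eq_Rintegral => s _; by rewrite mulN1r.
Qed.

Lemma Int_cont a b f : a <= b -> Intg a b f -> {within `[a, b], continuous (fun t => Int a t f)}.
Proof. move=> ab hf; exact: parameterized_integral_continuous. Qed.

Lemma E_int (al t0 a b : R) : a <= b ->
  Int a b (fun s => al * (expR (- al * s) * expR (al * t0))) =
  expR (- al * a) * expR (al * t0) - expR (- al * b) * expR (al * t0).
Proof.
move=> ab.
have h := int_expM (- al) ab.
have -> : (fun s => al * (expR (- al * s) * expR (al * t0))) =
   (fun s => - expR (al * t0) * (- al * expR (- al * s))).
  by apply/funext => s; ring.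
rewrite IntZ; last by apply: Intg_cont; move=> r; exact: cont_cexpM.
rewrite /Int h; ring.
Qed.

Lemma compare (al c t0 t1 : R) (z h b : R -> R) :
  0 <= al -> 0 <= c -> t0 <= t1 ->
  Intg t0 t1 h -> Intg t0 t1 b ->
  (forall t, t0 <= t <= t1 -> z t = z t0 + Int t0 t h) ->
  (forall s, t0 <= s <= t1 -> 0 <= b s) ->
  (forall s, t0 <= s <= t1 -> b s - al * z s <= h s) ->
  c <= z t0 ->
  expR (- al * (t1 - t0)) * (c + Int t0 t1 b) <= z t1.
Proof.
move=> al0 c0 t01 ih ib hz b0 hh zc.
pose E s := expR (- al * s) * expR (al * t0).
pose B s := Int t0 s b.
have Et0 : E t0 = 1 by rewrite /E -expRD mulNr addNr expR0.
have E1 : expR (- al * (t1 - t0)) = E t1 by rewrite /E -expRD; congr expR; ring.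
have Ele1 : forall s, t0 <= s -> E s <= 1.
  move=> s ts; rewrite /E -expRD expR_le1; nra.
have Ege0 : forall s, 0 <= E s by move=> s; rewrite /E mulr_ge0 // expR_ge0.
have Bmono : forall s, t0 <= s <= t1 -> B s <= B t1.
  move=> s /andP[ts st]; rewrite -subr_ge0 /B Int_split //.
  apply: Int_ge0 => r /andP[sr rt]; apply: b0; rewrite rt andbT; exact: le_trans sr.
rewrite E1 leNgt; apply/negP => zlt.
pose e s := z t0 + Int t0 s h - E s * (c + B s).
have cE : continuous E.
  by move=> r; apply: cvgM; [exact: cont_expM | exact: cvg_cst].
have ce : {within `[t0, t1], continuous e}.
  have cE' : {within `[t0, t1], continuous E} by exact: continuous_subspaceT.
  have cH := Int_cont t01 ih.
  have cB := Int_cont t01 ib.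
  rewrite /e /B => s; apply: cvgB.
    by apply: cvgD; [exact: cvg_cst | exact: cH].
  apply: cvgM; first exact: cE'.
  by apply: cvgD; [exact: cvg_cst | exact: cB].
have e0 : 0 <= e t0 by rewrite /e /B !Int0 Et0; lra.
have e1 : e t1 < 0.
  rewrite /e /B -hz ?lexx ?t01 //; lra.
have [s0 [ts0 s0t es0 neg]] := last_time t01 ce e0 e1.
have hzs0 : z s0 = z t0 + Int t0 s0 h by apply: hz; rewrite ts0 ltW.
have hzlt : forall s, s0 < s <= t1 -> z s < E s * (c + B t1).
  move=> s /andP[s0s st].
  have := neg s s0s st; rewrite /e -hz; last by rewrite st (le_trans ts0 (ltW s0s)).
  move=> h1; apply: (lt_le_trans (y := E s * (c + B s))); first lra.
  apply: ler_wpM2l => //; rewrite lerD2l; apply: Bmono.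
  by rewrite st (le_trans ts0 (ltW s0s)).
have ih' : Intg s0 t1 h by apply: IntgS ih => //; exact: ltW.
have ib' : Intg s0 t1 b by apply: IntgS ib => //; exact: ltW.
have iE : Intg s0 t1 (fun s => (c + B t1) * (al * E s)).
  by apply: IntgZ; apply: IntgZ; apply: Intg_cont.
have key : Int s0 t1 b - (c + B t1) * (E s0 - E t1) <= Int s0 t1 h.
  have <- : Int s0 t1 (fun s => (c + B t1) * (al * E s)) = (c + B t1) * (E s0 - E t1).
    by rewrite IntZ; [rewrite E_int // ltW | apply: IntgZ; apply: Intg_cont].
  rewrite -IntB //; apply: Int_le => //; first exact: IntgB.
  move=> s /andP[s0s st]; have hs : t0 <= s <= t1 by rewrite st (le_trans ts0 (ltW s0s)).
  have := hh s hs; have := hzlt s (introT andP (conj s0s st)) => h2 h3.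
  have : al * z s <= al * (E s * (c + B t1)) by apply: ler_wpM2l => //; exact: ltW.
  lra.
have hsplit : Int s0 t1 h = z t1 - z s0.
  rewrite hzs0 (hz t1); last by rewrite lexx t01.
  rewrite -(Int_split ts0 (ltW s0t) ih); ring.
have bsplit : Int s0 t1 b = B t1 - B s0 by rewrite /B -(Int_split ts0 (ltW s0t) ib).
have es0' : E s0 * (c + B s0) <= z s0 by move: es0; rewrite /e -hzs0; lra.
have Bs0 : B s0 <= B t1 by apply: Bmono; rewrite ts0 ltW.
have := Ele1 s0 ts0 => Es0.
have pos : 0 <= (B t1 - B s0) * (1 - E s0) by apply: mulr_ge0; lra.
have zlt' : z t1 < E t1 * (c + B t1) := zlt.
have ident : E s0 * (c + B s0) + (B t1 - B s0) - (c + B t1) * (E s0 - E t1) =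
  E t1 * (c + B t1) + (B t1 - B s0) * (1 - E s0) by ring.
move: zlt' key pos es0' ident; rewrite hsplit bsplit; lra.
Qed.
End S.

Section S2.
Context {R : realType}.
Notation mu := (@lebesgue_measure R).
Notation Intg := (@Intg R).
Notation Int := (@Int R).
Lemma small_le0 (x c : R) : 0 <= c -> (forall n : nat, x <= c / 2 ^+ n) -> x <= 0.
Proof.
move=> c0 h; rewrite leNgt; apply/negP => x0.
have hb := @archi_boundP R (c / x) (divr_ge0 c0 (ltW x0)).
set n := Num.bound (c / x) in hb.
have h2 : (n%:R : R) <= 2 ^+ n.
  have := ltn_expl n (isT : (1 < 2)%N) => /ltnW.
  by rewrite -(ler_nat R) natrX.
have := h n.
have p2 : 0 < (2 : R) ^+ n by apply: exprn_gt0.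
rewrite ler_pdivlMr //.
have h3 : c < x * n%:R by rewrite mulrC -(ltr_pdivrMr _ _ x0).
move=> h4.
have : x * n%:R <= x * 2 ^+ n by apply: ler_wpM2l => //; exact: ltW.
lra.
Qed.

Lemma gronwall (L t0 t1 : R) (U : R -> R) : 0 <= L -> t0 <= t1 -> Intg t0 t1 U ->
  (forall s, t0 <= s <= t1 -> 0 <= U s) ->
  (forall s, t0 <= s <= t1 -> U s <= L * Int t0 s U) ->
  forall s, t0 <= s <= t1 -> U s = 0.
Proof.
move=> L0 t01 iU U0 hU.
pose Q := Int t0 t1 U.
have IntU_le : forall s, t0 <= s <= t1 -> Int t0 s U <= Q.
  move=> s /andP[ts st]; rewrite -subr_ge0 /Q Int_split //.
  apply: Int_ge0 => r /andP[sr rt]; apply: U0; rewrite rt andbT; exact: le_trans sr.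
have Q0 : 0 <= Q by apply: Int_ge0.
pose Bd := L * Q.
have Bd0 : 0 <= Bd by apply: mulr_ge0.
pose W r := expR ((2 * L) * r).
pose C0 := Bd * expR (- (2 * L) * t0).
have C00 : 0 <= C0 by rewrite mulr_ge0 // expR_ge0.
have hW : forall s, t0 <= s -> 1 <= expR (- (2 * L) * t0) * W s.
  move=> s ts; rewrite /W -expRD -[X in X <= _]expR0 ler_expR; nra.
have P : forall n : nat, forall s, t0 <= s <= t1 -> U s <= C0 / 2 ^+ n * W s.
  elim => [|n IH] s /andP[ts st].
    rewrite expr0 divr1 /C0 -mulrA.
    apply: (le_trans (hU s _)); first by rewrite ts st.
    rewrite -/Bd; apply: (le_trans (ler_wpM2l L0 (IntU_le s _))); first by rewrite ts st.
    rewrite -[X in X <= _]mulr1; apply: ler_wpM2l => //; exact: hW.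
  apply: (le_trans (hU s _)); first by rewrite ts st.
  have iUs : Intg t0 s U by apply: IntgS iU.
  have iWs : Intg t0 s (fun r => C0 / 2 ^+ n * W r).
    apply: IntgZ; apply: Intg_cont => r; exact: cont_expM.
  have h : Int t0 s U <= Int t0 s (fun r => C0 / 2 ^+ n * W r).
    apply: (Int_le iUs iWs) => r /andP[tr rs]; apply: IH.
    by rewrite (ltW tr) (le_trans rs st).
  rewrite IntZ in h; last by apply: Intg_cont => r; exact: cont_expM.
  have hI : Int t0 s (fun r => (2 * L) * W r) = W s - W t0 by rewrite /W /Int int_expM.
  have hI' : L * Int t0 s W = (W s - W t0) / 2.
    rewrite -hI IntZ; last by apply: Intg_cont => r; exact: cont_expM.
    by field.
  have W0 : 0 <= W t0 by rewrite expR_ge0.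
  have p2 : 0 < (2 : R) ^+ n by apply: exprn_gt0.
  have c2 : 0 <= C0 / 2 ^+ n by apply: divr_ge0 => //; exact: ltW.
  apply: (le_trans (ler_wpM2l L0 h)).
  have -> : L * (C0 / 2 ^+ n * Int t0 s W) = C0 / 2 ^+ n * (L * Int t0 s W) by ring.
  rewrite hI' exprS.
  have -> : C0 / (2 * 2 ^+ n) = C0 / 2 ^+ n / 2 by rewrite invfM mulrA mulrAC.
  have : C0 / 2 ^+ n * W t0 >= 0 by apply: mulr_ge0.
  move: c2; set k := C0 / 2 ^+ n; nra.
move=> s hs; apply/eqP; rewrite eq_le U0 // andbT.
apply: (@small_le0 (U s) (C0 * W s)); first by rewrite mulr_ge0 // expR_ge0.
move=> n; rewrite mulrAC; exact: P.
Qed.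
End S2.

Section S3.
Context {R : realType}.
Notation mu := (@lebesgue_measure R).
Notation Intg := (@Intg R).
Notation Int := (@Int R).
Definition Hs (N : nat) (y : 'I_N -> R -> R) (A : 'I_N -> 'I_N -> R -> R) (i : 'I_N) (s : R) :=
  \sum_(j < N) A i j s * (y j s - y i s).

Definition sys1 (N : nat) (y : 'I_N -> R -> R) (A : 'I_N -> 'I_N -> R -> R) :=
  forall i t, 0 <= t -> Intg 0 t (Hs y A i) /\ y i t = y i 0 + Int 0 t (Hs y A i).

Lemma sys1_shift N y A i t0 t : @sys1 N y A -> 0 <= t0 -> t0 <= t ->
  Intg t0 t (Hs y A i) /\ y i t = y i t0 + Int t0 t (Hs y A i).
Proof.
move=> hs h0 h1; have [it yt] := hs i t (le_trans h0 h1).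
have [_ yt0] := hs i t0 h0.
split; first exact: IntgS it.
rewrite yt yt0 -(Int_split h0 h1 it); ring.
Qed.

Lemma cont_sum (T : topologicalType) (N : nat) (f : 'I_N -> T -> R) :
  (forall j, continuous (f j)) -> continuous (fun s => \sum_(j < N) f j s).
Proof.
move=> cf x; apply: cvg_big => //; first exact: add_continuous.
by move=> j _; exact: cf.
Qed.

Lemma min_mono N y A : (forall i j s, 0 <= s -> 0 <= A i j s) -> @sys1 N y A ->
  (forall t1, 0 <= t1 -> exists K, forall i j s, 0 <= s <= t1 -> A i j s <= K) ->
  forall t0 t1 m, 0 <= t0 -> t0 <= t1 -> (forall j, m <= y j t0) -> forall i, m <= y i t1.
Proof.
move=> hA0 hs hbnd t0 t1 m h0 h01 hm.
have [K0 hK0] := hbnd t1 (le_trans h0 h01).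
pose K := `|K0|.
have hK : forall i j s, 0 <= s <= t1 -> A i j s <= K.
  by move=> i j s hs'; apply: le_trans (hK0 i j s hs') _; exact: ler_norm.
have K0' : 0 <= K by exact: normr_ge0.
pose zz j s := y j t0 - m + Int t0 s (Hs y A j).
have zzE : forall j s, t0 <= s <= t1 -> zz j s = y j s - m.
  move=> j s /andP[ts st]; have [_ ->] := sys1_shift j hs h0 ts; rewrite /zz; ring.
have iH : forall j s, t0 <= s <= t1 -> Intg t0 s (Hs y A j).
  move=> j s /andP[ts st]; exact: (sys1_shift j hs h0 ts).1.
have czz : forall j s, t0 <= s <= t1 -> {within `[t0, s], continuous (zz j)}.
  move=> j s hts; have c := Int_cont (proj1 (andP hts)) (iH j s hts).
  by move=> r; apply: cvgD; [exact: cvg_cst | exact: c].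
pose u j s := (`|zz j s| - zz j s) / 2.
pose U s := \sum_(j < N) u j s.
have u0 : forall j s, 0 <= u j s.
  by move=> j s; rewrite /u divr_ge0 // subr_ge0 ler_norm.
have uzz : forall j s, - zz j s <= u j s.
  move=> j s; rewrite /u; have := ler_norm (- zz j s); rewrite normrN; lra.
have U0 : forall s, 0 <= U s by move=> s; apply: sumr_ge0 => j _.
have cU : {within `[t0, t1], continuous U}.
  rewrite /U /u /zz; apply: cont_sum => j r.
  apply: cvgM; last exact: cvg_cst.
  have cz : {within `[t0, t1], continuous (zz j)}.
    have c := Int_cont h01 (iH j t1 (introT andP (conj h01 (lexx t1)))).
    by move=> q; apply: cvgD; [exact: cvg_cst | exact: c].
  by apply: cvgB; [apply: cvg_norm | ]; exact: cz.
have iU : Intg t0 t1 U.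
  by apply: continuous_compact_integrable; [exact: segment_compact | exact: cU].
have claim : forall s, t0 <= s <= t1 -> U s <= (N%:R * K) * Int t0 s U.
  move=> s hts; have hts2 := hts; case/andP: hts => ts st.
  have iUs : Intg t0 s U by apply: IntgS iU.
  have IU0 : 0 <= Int t0 s U by apply: Int_ge0.
  have per : forall j, u j s <= K * Int t0 s U.
    move=> j; have [zpos|zneg] := leP 0 (zz j s).
      rewrite /u ger0_norm // subrr mul0r; exact: mulr_ge0.
    have zt0 : 0 <= zz j t0 by rewrite /zz Int0 addr0 subr_ge0.
    have [sg [tsg sgs zsg negs]] := last_time ts (czz j s hts2) zt0 zneg.
    have ujs : u j s = - zz j s by rewrite /u ltr0_norm //; field.
    rewrite ujs.
    have iHs : Intg sg s (Hs y A j) by apply: IntgS (iH j s hts2) => //.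
    have step1 : - zz j s <= Int sg s (fun r => - Hs y A j r).
      rewrite IntN // -(Int_split tsg (ltW sgs) (iH j s hts2)).
      by move: zsg; rewrite /zz; lra.
    apply: (le_trans step1).
    have iUsg : Intg sg s U by apply: IntgS iU.
    have step2 : Int sg s (fun r => - Hs y A j r) <= Int sg s (fun r => K * U r).
      apply: Int_le; [exact: IntgN | exact: IntgZ | ].
      move=> r /andP[sgr rs].
      have htr : t0 <= r <= t1 by rewrite (le_trans tsg (ltW sgr)) (le_trans rs st).
      have zr := negs r sgr rs.
      rewrite /Hs -sumrN /U mulr_sumr; apply: ler_sum => l _.
      have hAl := hA0 j l r (le_trans h0 (le_trans tsg (ltW sgr))).
      have hKl := hK j l r (introT andP (conj (le_trans h0 (le_trans tsg (ltW sgr))) (le_trans rs st))).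
      have zl := uzz l r.
      rewrite (zzE j r htr) in zr; rewrite (zzE l r htr) in zl.
      have ul := u0 l r.
      have p1 : A j l r * (y j r - m) <= 0 by apply: mulr_ge0_le0 => //; exact: ltW.
      have p2 : A j l r * (- (y l r - m)) <= A j l r * u l r by apply: ler_wpM2l.
      have p3 : A j l r * u l r <= K * u l r by apply: ler_wpM2r.
      have e : - (A j l r * (y l r - y j r)) = A j l r * (y j r - m) + A j l r * (- (y l r - m)) by ring.
      lra.
    apply: (le_trans step2); rewrite IntZ //; apply: ler_wpM2l => //.
    have e1 := Int_split tsg (ltW sgs) iUs.
    have e2 : 0 <= Int t0 sg U by apply: Int_ge0 => r _; exact: U0.
    lra.
  rewrite /U; apply: (le_trans (ler_sum _ (fun j _ => per j))).
  by rewrite sumr_const card_ord -[X in X <= _]mulr_natl mulrA.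
have UU := gronwall (mulr_ge0 (ler0n _ _) K0') h01 iU (fun s _ => U0 s) claim.
move=> i.
have Ut1 : U t1 = 0 by apply: UU; rewrite h01 lexx.
have ui : u i t1 = 0 by move/eqP: Ut1; rewrite psumr_eq0 // => /allP /(_ i (mem_index_enum _)) /eqP.
have := uzz i t1; rewrite ui (zzE i t1); last by rewrite h01 lexx.
lra.
Qed.
Lemma sum_low N (i : 'I_N) (a v : 'I_N -> R) (lo c : R) :
  (forall j, 0 <= a j <= c) -> (forall j, lo <= v j) ->
  \sum_(j | j != i) a j * (v j - lo) - (N%:R - 1) * c * (v i - lo) <=
  \sum_(j < N) a j * (v j - v i).
Proof.
move=> ha hv.
rewrite [X in _ <= X](bigD1 i) //= subrr mulr0 add0r.
have hc : \sum_(j | j != i) c * (v i - lo) = (N%:R - 1) * c * (v i - lo).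
  have h : \sum_(j < N) c * (v i - lo) = c * (v i - lo) *+ N by rewrite sumr_const card_ord.
  rewrite (bigD1 i) //= in h; move: h.
  move=> h; have -> : \sum_(j | j != i) c * (v i - lo) = c * (v i - lo) *+ N - c * (v i - lo) by rewrite -h; ring.
  by rewrite -mulr_natl; ring.
rewrite -hc -sumrB; apply: ler_sum => j _.
have [a0 ac] := andP (ha j); have := hv i; have := hv j => h1 h2.
have : a j * (v i - lo) <= c * (v i - lo) by apply: ler_wpM2r => //; lra.
have e : a j * (v j - v i) = a j * (v j - lo) - a j * (v i - lo) by ring.
lra.
Qed.

Lemma sum_ge_one N (i k : 'I_N) (w : 'I_N -> R) : k != i ->
  (forall j, 0 <= w j) -> w k <= \sum_(j | j != i) w j.
Proof.
move=> ki hw; rewrite (bigD1 k) //= lerDl; apply: sumr_ge0 => j _; exact: hw.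
Qed.

Lemma Int_cst0 a b : Int a b (fun _ => 0) = 0.
Proof. by rewrite /Int Rintegral_cst // mul0r. Qed.

Lemma HsN N y A i s : @Hs N (fun j r => - y j r) A i s = - Hs y A i s.
Proof.
rewrite /Hs -sumrN; apply: eq_bigr => j _; ring.
Qed.

Lemma sys1N N y A : @sys1 N y A -> sys1 (fun j r => - y j r) A.
Proof.
move=> hs i t ht; have [it yt] := hs i t ht.
have -> : Hs (fun j r => - y j r) A i = (fun s => - Hs y A i s).
  by apply/funext => s; rewrite HsN.
split; first exact: IntgN.
by rewrite IntN // yt opprD.
Qed.

Lemma max_mono N y A : (forall i j s, 0 <= s -> 0 <= A i j s) -> @sys1 N y A ->
  (forall t1, 0 <= t1 -> exists K, forall i j s, 0 <= s <= t1 -> A i j s <= K) ->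
  forall t0 t1 m, 0 <= t0 -> t0 <= t1 -> (forall j, y j t0 <= m) -> forall i, y i t1 <= m.
Proof.
move=> hA0 hs hb t0 t1 m h0 h01 hm i.
have := @min_mono N (fun j r => - y j r) A hA0 (sys1N hs) hb t0 t1 (- m) h0 h01.
move=> /(_ _ i); rewrite lerN2; apply => j; rewrite lerN2; exact: hm.
Qed.
End S3.

Section S4.
Context {R : realType}.
Notation mu := (@lebesgue_measure R).
Notation Intg := (@Intg R).
Notation Int := (@Int R).
Lemma frac_le (a n : R) : 0 <= a -> 0 < n -> a / (n + a) <= a / n /\ a / (n + a) <= 1.
Proof.
move=> a0 n0; split.
  apply: ler_wpM2l => //; rewrite lef_pV2 ?posrE //; first lra.
  by apply: ltr_wpDr.
by rewrite ler_pdivrMr ?mul1r; lra.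
Qed.

Lemma gain N (y : 'I_N -> R -> R) (A M : 'I_N -> 'I_N -> R -> R) (mlo mhi T mu t0 lo D : R) (k : 'I_N) :
  (1 <= N)%N ->
  (forall i j s, 0 <= s -> 0 <= A i j s) -> sys1 y A ->
  (forall t1, 0 <= t1 -> exists K, forall i j s, 0 <= s <= t1 -> A i j s <= K) ->
  (forall i j s, 0 <= s -> A i j s <= mhi / N%:R) ->
  (forall i j s, 0 <= s -> mlo / N%:R * M i j s <= A i j s) ->
  (forall i j s, 0 <= s -> 0 <= M i j s) ->
  (forall i j, Intg t0 (t0 + T) (M i j)) ->
  (forall i j, mu * T <= Int t0 (t0 + T) (M i j)) ->
  0 <= t0 -> 0 < T -> 0 < mlo -> 0 <= mhi -> 0 <= mu ->
  (forall j, lo <= y j t0) -> 0 <= D -> D <= y k t0 - lo ->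
  forall i, lo + expR (- (2 * ((N%:R - 1) * (mhi / N%:R)) * T)) *
     (mlo * mu * T / (N%:R + mlo * mu * T)) * D <= y i (t0 + T).
Proof.
move=> N1 hA0 hs hb hAhi hAlo hM0 hMi hPE t00 T0 mlo0 mhi0 mu0 hlo D0 hD i.
have Nr : (1 : R) <= N%:R by rewrite ler1n.
set al := (N%:R - 1) * (mhi / N%:R).
have al0 : 0 <= al by apply: mulr_ge0; [lra | apply: divr_ge0].
set t1 := t0 + T.
have t01 : t0 <= t1 by rewrite /t1; lra.
have zpos : forall j s, t0 <= s -> lo <= y j s.
  move=> j s ts; exact: (min_mono hA0 hs hb t00 ts hlo).
have sh : forall j s, t0 <= s -> Intg t0 s (Hs y A j) /\ y j s = y j t0 + Int t0 s (Hs y A j).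
  move=> j s ts; exact: sys1_shift.
have Hlow : forall j s, t0 <= s ->
    \sum_(l | l != j) A j l s * (y l s - lo) - al * (y j s - lo) <= Hs y A j s.
  move=> j s ts; rewrite /al /Hs; apply: (@sum_low _ N j (fun l => A j l s) (fun l => y l s) lo (mhi / N%:R)).
    move=> l; rewrite hA0 ?hAhi //; exact: le_trans ts.
  by move=> l; exact: zpos.
have sumpos : forall j s, t0 <= s -> 0 <= \sum_(l | l != j) A j l s * (y l s - lo).
  move=> j s ts; apply: sumr_ge0 => l _; apply: mulr_ge0.
    apply: hA0; exact: le_trans ts.
  by rewrite subr_ge0; exact: zpos.
pose ET := expR (- al * T).
have ET0 : 0 <= ET by exact: expR_ge0.
have zk : forall t, t0 <= t <= t1 -> ET * D <= y k t - lo.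
  move=> t /andP[tt tt1].
  have [iH yt] := sh k t tt.
  have := @compare R al D t0 t (fun s => y k s - lo) (Hs y A k) (fun _ => 0) al0 D0 tt iH.
  move=> /(_ _ _ _ _ hD) h.
  have h2 : expR (- al * (t - t0)) * (D + Int t0 t (fun _ => 0)) <= y k t - lo.
    apply: h.
    - by apply: Intg_cont => r; exact: cvg_cst.
    - by move=> r /andP[tr rt]; have [_ ->] := sh k r tr; ring.
    - by [].
    - move=> r /andP[tr rt]; have := Hlow k r tr; have := sumpos k r tr.
      have : 0 <= al * (y k r - lo) by apply: mulr_ge0 => //; rewrite subr_ge0; exact: zpos.
      lra.
  apply: le_trans h2; rewrite Int_cst0 addr0 ler_wpM2r // /ET ler_expR.
  have : t - t0 <= T by rewrite /t1 in tt1; lra.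
  nra.
have Ek : ET * D <= y k t1 - lo by apply: zk; rewrite t01 lexx.
set a := mlo * mu * T.
have a0 : 0 <= a by rewrite /a !mulr_ge0 // ltW.
have N0 : (0 : R) < N%:R by lra.
have [fa1 fa2] := frac_le a0 N0.
have E2 : expR (- (2 * al * T)) = ET * ET by rewrite /ET -expRD; congr expR; ring.
rewrite E2.
have ETle1 : ET <= 1 by rewrite /ET expR_le1; nra.
have [->|ik] := eqVneq i k.
  have : ET * ET * (a / (N%:R + a)) * D <= ET * D.
    apply: ler_wpM2r => //.
    have : 0 <= a / (N%:R + a) by apply: divr_ge0 => //; lra.
    move: fa2; set q := a / (N%:R + a) => h1 h2.
    have : ET * ET * q <= ET * 1 * 1 by apply: ler_pM => //; [exact: mulr_ge0 | apply: ler_pM].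
    lra.
  lra.
pose cst := mlo / N%:R * (D * ET).
have cst0 : 0 <= cst by apply: mulr_ge0; [apply: divr_ge0; lra | exact: mulr_ge0].
have [iHi yti] := sh i t1 t01.
have := @compare R al 0 t0 t1 (fun s => y i s - lo) (Hs y A i) (fun s => cst * M i k s) al0 (lexx 0) t01 iHi.
move=> /(_ _ _ _ _ _) h.
have h2 : expR (- al * (t1 - t0)) * (0 + Int t0 t1 (fun s => cst * M i k s)) <= y i t1 - lo.
  apply: h.
  - exact: IntgZ.
  - by move=> r /andP[tr rt]; have [_ ->] := sh i r tr; ring.
  - move=> r /andP[tr _]; apply: mulr_ge0 => //; apply: hM0; exact: le_trans tr.
  - move=> r /andP[tr rt]; have := Hlow i r tr.
    have r0 : 0 <= r by exact: le_trans tr.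
    have h3 : A i k r * (y k r - lo) <= \sum_(l | l != i) A i l r * (y l r - lo).
      apply: (@sum_ge_one _ N i k (fun l => A i l r * (y l r - lo))); first by rewrite eq_sym.
      move=> l; apply: mulr_ge0; first exact: hA0.
      by rewrite subr_ge0; exact: zpos.
    have zkr : ET * D <= y k r - lo by apply: zk; rewrite tr rt.
    have Alo := hAlo i k r r0.
    have Mk0 := hM0 i k r r0.
    have : cst * M i k r <= A i k r * (y k r - lo).
      rewrite /cst mulrAC [D * ET]mulrC; apply: ler_pM => //.
        by apply: mulr_ge0 => //; apply: divr_ge0; lra.
      exact: mulr_ge0.
    lra.
  - by rewrite subr_ge0; exact: hlo.
have hT : t1 - t0 = T by rewrite /t1; ring.
rewrite hT add0r IntZ // -/ET in h2.
have hI := hPE i k.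
have : ET * (cst * (mu * T)) <= ET * (cst * Int t0 t1 (M i k)).
  by apply: ler_wpM2l => //; apply: ler_wpM2l.
have : ET * ET * (a / (N%:R + a)) * D <= ET * (cst * (mu * T)).
  have -> : ET * (cst * (mu * T)) = ET * ET * (a / N%:R) * D.
    by rewrite /cst /a; field; rewrite gt_eqF.
  apply: ler_wpM2r => //; apply: ler_wpM2l => //; exact: mulr_ge0.
lra.
Qed.
End S4.

Section S5.
Context {R : realType}.
Notation mu := (@lebesgue_measure R).
Notation Intg := (@Intg R).
Notation Int := (@Int R).
Lemma argmax_ex N (f : 'I_N -> R) : (0 < N)%N -> exists a, forall j, f j <= f a.
Proof.
move=> N0; pose i0 := Ordinal N0.
case: (@arg_maxP _ _ 'I_N i0 xpredT f isT) => a _ h.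
by exists a => j; apply: h.
Qed.

Lemma step1D N (y : 'I_N -> R -> R) (A M : 'I_N -> 'I_N -> R -> R) (mlo mhi T mu t0 lo hi : R) :
  (1 <= N)%N ->
  (forall i j s, 0 <= s -> 0 <= A i j s) -> sys1 y A ->
  (forall t1, 0 <= t1 -> exists K, forall i j s, 0 <= s <= t1 -> A i j s <= K) ->
  (forall i j s, 0 <= s -> A i j s <= mhi / N%:R) ->
  (forall i j s, 0 <= s -> mlo / N%:R * M i j s <= A i j s) ->
  (forall i j s, 0 <= s -> 0 <= M i j s) ->
  (forall i j, Intg t0 (t0 + T) (M i j)) ->
  (forall i j, mu * T <= Int t0 (t0 + T) (M i j)) ->
  0 <= t0 -> 0 < T -> 0 < mlo -> 0 <= mhi -> 0 <= mu ->
  (forall j, lo <= y j t0 <= hi) ->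
  forall i l, y i (t0 + T) - y l (t0 + T) <=
    (1 - 2^-1 * (expR (- (2 * ((N%:R - 1) * (mhi / N%:R)) * T)) *
     (mlo * mu * T / (N%:R + mlo * mu * T)))) * (hi - lo).
Proof.
move=> N1 hA0 hs hb hAhi hAlo hM0 hMi hPE t00 T0 mlo0 mhi0 mu0 hlh i l.
set c := expR _ * _.
have c0 : 0 <= c.
  rewrite /c mulr_ge0 ?expR_ge0 // divr_ge0 //; first by rewrite !mulr_ge0 // ltW.
  by rewrite addr_ge0 // ?ler0n // !mulr_ge0 // ltW.
pose k := Ordinal N1.
have hk := hlh k; case/andP: hk => lk kh.
have Tt : t0 <= t0 + T by lra.
have hmax : forall j, y j (t0 + T) <= hi.
  move=> j; apply: (max_mono hA0 hs hb t00 Tt) => j'; exact: (andP (hlh j')).2.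
have hmin : forall j, lo <= y j (t0 + T).
  move=> j; apply: (min_mono hA0 hs hb t00 Tt) => j'; exact: (andP (hlh j')).1.
have D0 : 0 <= (hi - lo) / 2 by apply: divr_ge0 => //; lra.
have [up|down] := lerP ((hi - lo) / 2) (y k t0 - lo).
  have := @gain R N y A M mlo mhi T mu t0 lo ((hi - lo) / 2) k N1 hA0 hs hb hAhi hAlo hM0 hMi hPE
     t00 T0 mlo0 mhi0 mu0 (fun j => (andP (hlh j)).1) D0 up.
  move=> /(_ l) h.
  have := hmax i; rewrite -/c in h; lra.
have := @gain R N (fun j s => - y j s) A M mlo mhi T mu t0 (- hi) ((hi - lo) / 2) k N1 hA0 (sys1N hs) hb hAhi hAlo hM0 hMi hPE
   t00 T0 mlo0 mhi0 mu0.
move=> /(_ _ D0 _ i) h.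
have := hmin l.
have h' : - hi + c * ((hi - lo) / 2) <= - y i (t0 + T).
  rewrite /c; apply: h.
  - by move=> j; rewrite lerN2; exact: (andP (hlh j)).2.
  - lra.
lra.
Qed.
End S5.

Section Dot.
Context {R : realType} (d : nat).
Definition dot (v w : 'rV[R]_d) := \sum_(k < d) v ord0 k * w ord0 k.

Lemma enorm_ge0 (v : 'rV[R]_d) : 0 <= enorm v.
Proof. exact: sqrtr_ge0. Qed.

Lemma enorm_sq (v : 'rV[R]_d) : enorm v ^+ 2 = dot v v.
Proof.
rewrite /enorm sqr_sqrtr; last by apply: sumr_ge0 => k _; exact: sqr_ge0.
by apply: eq_bigr => k _; rewrite expr2.
Qed.

Lemma dot_ge0 (v : 'rV[R]_d) : 0 <= dot v v.
Proof. by apply: sumr_ge0 => k _; rewrite -expr2 sqr_ge0. Qed.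

Lemma dot0 (v w : 'rV[R]_d) : dot v v = 0 -> dot v w = 0.
Proof.
move=> h; have h2 := psumr_eq0P (fun k _ => sqr_ge0 (v ord0 k)).
rewrite /dot; apply: big1 => k _.
have hs : \sum_(j < d) v ord0 j ^+ 2 = 0.
  by rewrite -[RHS]h /dot; apply: eq_bigr => j _; rewrite expr2.
have : v ord0 k ^+ 2 = 0.
  exact: (h2 xpredT hs k isT).
by move/eqP; rewrite sqrf_eq0 => /eqP ->; rewrite mul0r.
Qed.

Lemma dotC (v w : 'rV[R]_d) : dot v w = dot w v.
Proof. by apply: eq_bigr => k _; rewrite mulrC. Qed.

Lemma CS (v w : 'rV[R]_d) : dot v w <= enorm v * enorm w.
Proof.
set a := enorm v; set b := enorm w.
have a0 : 0 <= a := enorm_ge0 v. have b0 : 0 <= b := enorm_ge0 w.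
have ha : a ^+ 2 = dot v v := enorm_sq v. have hb : b ^+ 2 = dot w w := enorm_sq w.
have key : 0 <= \sum_(k < d) (b * v ord0 k - a * w ord0 k) ^+ 2 by apply: sumr_ge0 => k _; exact: sqr_ge0.
have e : \sum_(k < d) (b * v ord0 k - a * w ord0 k) ^+ 2 =
   b ^+ 2 * dot v v - 2 * a * b * dot v w + a ^+ 2 * dot w w.
  rewrite /dot !mulr_sumr -sumrB -big_split /=.
  apply: eq_bigr => k _; ring.
rewrite e -ha -hb in key.
have [a00|apos] := eqVneq a 0.
  have : dot v v = 0 by rewrite -ha a00 expr2 mul0r.
  by move/(dot0 w) => ->; rewrite a00 mul0r.
have [b00|bpos] := eqVneq b 0.
  have : dot w w = 0 by rewrite -hb b00 expr2 mul0r.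
  by move/(dot0 v); rewrite dotC => ->; rewrite b00 mulr0.
have ab : 0 < a * b by rewrite mulr_gt0 // lt0r ?apos ?bpos.
have : 0 <= 2 * (a * b) * (a * b - dot v w).
  move: key; have -> : b ^+ 2 * a ^+ 2 - 2 * a * b * dot v w + a ^+ 2 * b ^+ 2 = 2 * (a * b) * (a * b - dot v w) by ring.
  by [].
rewrite pmulr_rge0 ?subr_ge0 //; by rewrite mulr_gt0.
Qed.
End Dot.

Section Sums.
Context {R : realType}.
Notation Intg := (@Intg R).
Notation Int := (@Int R).

Lemma IntgSum (I : Type) (r : seq I) (P : pred I) (f : I -> R -> R) a b :
  (forall k, Intg a b (f k)) -> Intg a b (fun s => \sum_(k <- r | P k) f k s).
Proof.
move=> hf; elim: r => [|k r IH].
  have -> : (fun s => \sum_(k <- [::] | P k) f k s) = (fun _ => 0).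
    by apply/funext => s; rewrite big_nil.
  by apply: Intg_cont => s; exact: cvg_cst.
have -> : (fun s => \sum_(j <- k :: r | P j) f j s) =
   (fun s => (if P k then f k s else 0) + \sum_(j <- r | P j) f j s).
  by apply/funext => s; rewrite big_cons; case: (P k); rewrite ?add0r.
apply: IntgD => //; case: (P k) => //.
by apply: Intg_cont => s; exact: cvg_cst.
Qed.

Lemma IntSum (I : Type) (r : seq I) (P : pred I) (f : I -> R -> R) a b :
  (forall k, Intg a b (f k)) ->
  Int a b (fun s => \sum_(k <- r | P k) f k s) = \sum_(k <- r | P k) Int a b (f k).
Proof.
move=> hf; elim: r => [|k r IH].
  have -> : (fun s => \sum_(k <- [::] | P k) f k s) = (fun _ => 0).
    by apply/funext => s; rewrite big_nil.
  by rewrite Int_cst0 big_nil.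
have -> : (fun s => \sum_(j <- k :: r | P j) f j s) =
   (fun s => (if P k then f k s else 0) + \sum_(j <- r | P j) f j s).
  by apply/funext => s; rewrite big_cons; case: (P k); rewrite ?add0r.
rewrite IntD //; last exact: IntgSum.
  rewrite IH big_cons; case: (P k) => //; by rewrite Int_cst0 add0r.
by case: (P k) => //; apply: Intg_cont => s; exact: cvg_cst.
Qed.

Lemma sq_le (v B : R) : `|v| <= B -> v ^+ 2 <= B ^+ 2.
Proof.
move=> h; rewrite -real_normK ?num_real // !expr2; apply: ler_pM => //.
Qed.

Lemma bigmax_ge0 (I : finType) (F : I -> R) : 0 <= \big[Num.max/0]_(i : I) F i.
Proof.
rewrite unlock; elim: (index_enum I) => //= i r IH.
by rewrite le_max IH orbT.
Qed.

End Sums.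

Section Main.
Context (R : realType) (N d : nat) (hN : (2 <= N)%N) (hd : (1 <= d)%N)
  (M : 'I_N -> 'I_N -> R -> R)
  (lam : 'I_N -> config R N d -> R)
  (phi : 'I_N -> 'I_N -> 'rV[R]_d -> 'rV[R]_d -> R)
  (x : R -> config R N d)
  (mlo mhi T mu : R)
  (hMmeas : forall i j, measurable_fun (`[0, +oo[ : set R) (M i j))
  (hMrange : forall i j t, 0 <= t -> 0 <= M i j t <= 1)
  (hlamL : forall i, lipschitz_config (lam i))
  (hlampos : forall i y, 0 < lam i y)
  (hphiL : forall i j, lipschitz_pair (phi i j))
  (hphipos : forall i j a b, 0 < phi i j a b)
  (hsol : caratheodory_solution lam phi M x)
  (hmlo_lb : forall i j (y : config R N d), (forall k, enorm (y k) <= config_radius (x 0)) ->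
      mlo <= lam i y * phi i j (y i) (y j))
  (hmlo_att : exists i j (y : config R N d), (forall k, enorm (y k) <= config_radius (x 0)) /\
      lam i y * phi i j (y i) (y j) = mlo)
  (hmhi_ub : forall i j (y : config R N d), (forall k, enorm (y k) <= config_radius (x 0)) ->
      lam i y * phi i j (y i) (y j) <= mhi)
  (hmhi_att : exists i j (y : config R N d), (forall k, enorm (y k) <= config_radius (x 0)) /\
      lam i y * phi i j (y i) (y j) = mhi)
  (hT : 0 < T) (hmu : 0 < mu)
  (hPE : forall i j t, 0 <= t ->
      T^-1 * Rintegral lebesgue_measure `[t, t + T] (M i j) >= mu).

Notation Intg := (@Intg R).
Notation Int := (@Int R).

Definition AA i j s := lam i (x s) / N%:R * (M i j s * phi i j (x s i) (x s j)).
Definition yw (w : 'rV[R]_d) i s := dot (x s i) w.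

Lemma rhs_dot (w : 'rV[R]_d) i s : \sum_(k < d) w ord0 k * rhs lam phi M x i k s = Hs (yw w) AA i s.
Proof.
rewrite /rhs /Hs.
transitivity (\sum_(k < d) \sum_(j < N) w ord0 k * (lam i (x s) / N%:R *
    (M i j s * phi i j (x s i) (x s j) * (x s j ord0 k - x s i ord0 k)))).
  by apply: eq_bigr => k _; rewrite !mulr_sumr.
rewrite exchange_big /=; apply: eq_bigr => j _.
rewrite /yw /dot /AA -sumrB mulr_sumr; apply: eq_bigr => k _; ring.
Qed.

Lemma sys_w (w : 'rV[R]_d) : sys1 (yw w) AA.
Proof.
move=> i t ht.
have hk := fun k => hsol ht i k.
have eH : Hs (yw w) AA i = (fun s => \sum_(k < d) w ord0 k * rhs lam phi M x i k s).
  by apply/funext => s; rewrite rhs_dot.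
have ik : forall k, Intg 0 t (fun s => w ord0 k * rhs lam phi M x i k s).
  by move=> k; apply: IntgZ; exact: (hk k).1.
rewrite eH; split; first exact: IntgSum.
rewrite IntSum // /yw /dot -big_split /=; apply: eq_bigr => k _.
rewrite (hk k).2 IntZ; last exact: (hk k).1.
rewrite /Int; ring.
Qed.


Lemma AA_ge0 i j s : 0 <= s -> 0 <= AA i j s.
Proof.
move=> s0; rewrite /AA; apply: mulr_ge0.
  by apply: divr_ge0; [exact: ltW | exact: ler0n].
apply: mulr_ge0; first by case/andP: (hMrange i j s0).
exact: ltW.
Qed.

Lemma le_sum_term (I : finType) (F : I -> R) (j : I) :
  (forall i, 0 <= F i) -> F j <= \sum_(i : I) F i.
Proof.
by move=> h; rewrite (bigD1 j) //= lerDl; apply: sumr_ge0 => i _.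
Qed.

Lemma xbound t1 : 0 <= t1 -> exists B, 0 <= B /\
  forall s i k, 0 <= s <= t1 -> `|x s i ord0 k| <= B.
Proof.
move=> t10.
pose f i k := rhs lam phi M x i k.
pose Bik i k := `|x 0 i ord0 k| + Int 0 t1 (fun s => `|f i k s|).
have B0 : forall i k, 0 <= Bik i k.
  by move=> i k; apply: addr_ge0 => //; apply: Int_ge0.
exists (\sum_(i < N) \sum_(k < d) Bik i k); split.
  by apply: sumr_ge0 => i _; apply: sumr_ge0.
move=> s i k /andP[s0 st].
apply: (@le_trans _ _ (Bik i k)); last first.
  apply: (le_trans (le_sum_term k (B0 i))).
  apply: (le_sum_term i (F := fun i => \sum_(k < d) Bik i k)) => i'.
  by apply: sumr_ge0.
have [ik ek] := hsol s0 i k.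
have [ik1 _] := hsol t10 i k.
rewrite ek /Bik.
apply: (le_trans (ler_normD _ _)); rewrite lerD2l.
have ik' : Intg 0 s (f i k) := ik.
apply: (le_trans (le_normr_Rintegral _ ik)) => //.
have ia : Intg 0 t1 (fun r => `|f i k r|) by exact: integrable_norm.
have := Int_split s0 st ia.
have : 0 <= Int s t1 (fun r => `|f i k r|) by apply: Int_ge0.
rewrite /Int; lra.
Qed.


Lemma fin_choice (P : 'I_N -> 'I_N -> R -> Prop) :
  (forall i j K K', K <= K' -> P i j K -> P i j K') ->
  (forall i j, exists K, P i j K) -> exists K, forall i j, P i j K.
Proof.
move=> mono h.
have [f hf] := boolp.choice (fun ij : 'I_N * 'I_N => h ij.1 ij.2).
exists (\sum_(i < N) \sum_(j < N) `|f (i, j)|) => i j.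
apply: mono (hf (i, j)).
apply: (le_trans (ler_norm _)).
apply: (le_trans (le_sum_term j (F := fun j => `|f (i, j)|) _)) => //.
by apply: (le_sum_term i (F := fun i => \sum_(j < N) `|f (i, j)|)) => i'; apply: sumr_ge0.
Qed.

Lemma AA_bnd t1 : 0 <= t1 -> exists K, forall i j s, 0 <= s <= t1 -> AA i j s <= K.
Proof.
move=> t10; have [B [B0 hB]] := xbound t10.
pose CB := Num.sqrt (\sum_(i < N) \sum_(k < d) B ^+ 2).
pose EB := Num.sqrt (\sum_(k < d) B ^+ 2).
pose PB := Num.sqrt (EB ^+ 2 + EB ^+ 2).
have hC : forall s, 0 <= s <= t1 -> cnorm (x s) <= CB.
  move=> s hs; rewrite /cnorm /CB ler_sqrt; last by apply: sumr_ge0 => i _; apply: sumr_ge0 => k _; exact: sqr_ge0.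
  by apply: ler_sum => i _; apply: ler_sum => k _; apply: sq_le; exact: hB.
have hE : forall s i, 0 <= s <= t1 -> enorm (x s i) <= EB.
  move=> s i hs; rewrite /enorm /EB ler_sqrt; last by apply: sumr_ge0 => k _; exact: sqr_ge0.
  by apply: ler_sum => k _; apply: sq_le; exact: hB.
have EB0 : 0 <= EB by exact: sqrtr_ge0.
have hP : forall s i j, 0 <= s <= t1 ->
    Num.sqrt (enorm (x s i - 0) ^+ 2 + enorm (x s j - 0) ^+ 2) <= PB.
  move=> s i j hs; rewrite !subr0 /PB ler_sqrt; last by apply: addr_ge0; exact: sqr_ge0.
  by apply: lerD; apply: sq_le; rewrite ger0_norm ?enorm_ge0 //; exact: hE.
apply: fin_choice.
  by move=> i j K K' KK' h s hs; apply: le_trans KK'; exact: h.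
move=> i j.
have [Ll hLl] := hlamL i.
have [Lp hLp] := hphiL i j.
pose z0 : config R N d := fun _ => 0.
exists ((`|lam i z0| + `|Ll| * CB) / N%:R * (`|phi i j 0 0| + `|Lp| * PB)).
move=> s hs; have s0 : 0 <= s by case/andP: hs.
have lamb : lam i (x s) <= `|lam i z0| + `|Ll| * CB.
  have h1 := hLl (x s) z0.
  have e : (fun i0 => x s i0 - z0 i0) = x s by apply/funext => i0; rewrite /z0 subr0.
  rewrite e in h1.
  have c0 : 0 <= cnorm (x s) by exact: sqrtr_ge0.
  have h2 : Ll * cnorm (x s) <= `|Ll| * CB.
    apply: (le_trans (ler_wpM2r c0 (ler_norm Ll))); apply: ler_wpM2l => //; exact: hC.
  have h3 : lam i (x s) - lam i z0 <= `|lam i (x s) - lam i z0| by exact: ler_norm.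
  have h4 : lam i z0 <= `|lam i z0| by exact: ler_norm.
  lra.
have phib : phi i j (x s i) (x s j) <= `|phi i j 0 0| + `|Lp| * PB.
  have h1 := hLp (x s i) (x s j) 0 0.
  set q := Num.sqrt _ in h1.
  have q0 : 0 <= q by exact: sqrtr_ge0.
  have h2 : Lp * q <= `|Lp| * PB.
    apply: (le_trans (ler_wpM2r q0 (ler_norm Lp))); apply: ler_wpM2l => //; exact: hP.
  have h3 := ler_norm (phi i j (x s i) (x s j) - phi i j 0 0).
  have h4 : phi i j 0 0 <= `|phi i j 0 0| by exact: ler_norm.
  lra.
have Nr : (0 : R) < N%:R by rewrite ltr0n; apply: leq_trans hN.
have [M0 M1] := andP (hMrange i j s0).
have l0 := ltW (hlampos i (x s)). have p0 := ltW (hphipos i j (x s i) (x s j)).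
rewrite /AA; apply: ler_pM.
- by apply: divr_ge0 => //; exact: ltW.
- exact: mulr_ge0.
- by apply: ler_wpM2r => //; exact: ltW.
- have : M i j s * phi i j (x s i) (x s j) <= 1 * phi i j (x s i) (x s j) by apply: ler_wpM2r.
  rewrite mul1r => h; exact: le_trans h phib.
Qed.


Lemma radius_ge0 : 0 <= config_radius (x 0).
Proof. exact: bigmax_ge0. Qed.

Lemma le_radius j : enorm (x 0 j) <= config_radius (x 0).
Proof. rewrite /config_radius; exact: le_bigmax. Qed.

Lemma ball_inv s i : 0 <= s -> enorm (x s i) <= config_radius (x 0).
Proof.
move=> s0; set r := config_radius (x 0); set w := x s i.
have r0 : 0 <= r := radius_ge0.
have hm : forall j, yw w j 0 <= r * enorm w.
  move=> j; rewrite /yw; apply: (le_trans (CS _ _)); apply: ler_wpM2r; first exact: enorm_ge0.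
  exact: le_radius.
have := max_mono (@AA_ge0) (sys_w w) (@AA_bnd) (lexx 0) s0 hm i.
rewrite /yw -/w -enorm_sq.
have [e0|epos] := eqVneq (enorm w) 0; first by rewrite e0.
have ep : 0 < enorm w by rewrite lt0r epos enorm_ge0.
by rewrite expr2 ler_pM2r.
Qed.

Lemma AA_eq i j s : AA i j s = lam i (x s) * phi i j (x s i) (x s j) / N%:R * M i j s.
Proof. by rewrite /AA; ring. Qed.

Lemma Npos : (0 : R) < N%:R.
Proof. by rewrite ltr0n; apply: leq_trans hN. Qed.

Lemma mhi_ge0 : 0 <= mhi.
Proof.
have [i [j [y [hy <-]]]] := hmhi_att.
by apply: mulr_ge0; apply: ltW.
Qed.

Lemma mlo_gt0 : 0 < mlo.
Proof.
have [i [j [y [hy <-]]]] := hmlo_att.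
by apply: mulr_gt0.
Qed.

Lemma AA_hi i j s : 0 <= s -> AA i j s <= mhi / N%:R.
Proof.
move=> s0; rewrite AA_eq.
have h := hmhi_ub i j (fun k => ball_inv k s0).
have [M0 M1] := andP (hMrange i j s0).
have N0 := Npos.
have : lam i (x s) * phi i j (x s i) (x s j) / N%:R <= mhi / N%:R.
  by rewrite ler_pM2r // invr_gt0.
move=> h2; rewrite -[X in _ <= X]mulr1; apply: ler_pM => //.
apply: divr_ge0; [apply: mulr_ge0; apply: ltW => // | exact: ltW].
Qed.

Lemma AA_lo i j s : 0 <= s -> mlo / N%:R * M i j s <= AA i j s.
Proof.
move=> s0; rewrite AA_eq.
have h := hmlo_lb i j (fun k => ball_inv k s0).
have [M0 M1] := andP (hMrange i j s0).
have N0 := Npos.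
apply: ler_wpM2r => //; by rewrite ler_pM2r // invr_gt0.
Qed.

Lemma M_int i j t0 : 0 <= t0 -> Intg t0 (t0 + T) (M i j).
Proof.
move=> t00; apply: measurable_bounded_integrable.
- exact: measurable_itv.
- by apply: compact_finite_measure; exact: segment_compact.
- apply: measurable_funS (hMmeas i j) => //.
  by move=> r; rewrite /= !in_itv /= => /andP[tr _]; rewrite andbT (le_trans t00 tr).
- exists 1; split; first exact: num_real.
  move=> K K1 r; rewrite /= in_itv /= => /andP[tr _].
  have [M0 M1] := andP (hMrange i j (le_trans t00 tr)).
  rewrite ger0_norm //; exact: le_trans M1 (ltW K1).
Qed.

Lemma PE_int i j t0 : 0 <= t0 -> mu * T <= Int t0 (t0 + T) (M i j).
Proof.
move=> t00; have := hPE i j t00; rewrite ler_pdivlMl // mulrC; exact.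
Qed.


Lemma dot_subl (u v w : 'rV[R]_d) : dot (u - v) w = dot u w - dot v w.
Proof.
rewrite /dot -sumrB; apply: eq_bigr => k _; rewrite !mxE; ring.
Qed.

Lemma le_diam (y : config R N d) a b : enorm (y a - y b) <= config_diam y.
Proof.
rewrite /config_diam.
apply: le_trans (le_bigmax _ (fun i => \big[Num.max/0]_(j < N) enorm (y i - y j)) a).
exact: (le_bigmax _ (fun j => enorm (y a - y j)) b).
Qed.

Definition Cc := 1 - 2^-1 * (mlo * mu * T / (N%:R + mlo * mu * T))
         * expR (- (2 * ((N%:R - 1) / N%:R) * T * mhi)).

Lemma Cc_ge0 : 0 <= Cc.
Proof.
rewrite /Cc.
have a0 : 0 <= mlo * mu * T by rewrite !mulr_ge0 // ltW // mlo_gt0.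
have N0 := Npos.
have [_ q1] := frac_le a0 N0.
have q0 : 0 <= mlo * mu * T / (N%:R + mlo * mu * T) by apply: divr_ge0 => //; lra.
have E1 : expR (- (2 * ((N%:R - 1) / N%:R) * T * mhi)) <= 1.
  rewrite expR_le1 oppr_le0; apply: mulr_ge0; last exact: mhi_ge0.
  apply: mulr_ge0; last exact: ltW.
  apply: mulr_ge0 => //; apply: divr_ge0; last exact: ltW.
  by rewrite subr_ge0 ler1n; apply: leq_trans hN.
have E0 := expR_ge0 (- (2 * ((N%:R - 1) / N%:R) * T * mhi)).
have h := ler_pM q0 E0 q1 E1; rewrite mulr1 in h.
move: h q0 E0; set q := _ / _; set E := expR _ => h q0 E0.
have -> : 1 - 2^-1 * q * E = 1 - (q * E) / 2 by field.
lra.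
Qed.

Lemma step_d t0 : 0 <= t0 -> config_diam (x (t0 + T)) <= Cc * config_diam (x t0).
Proof.
move=> t00.
set D0 := config_diam (x t0).
have D00 : 0 <= D0 by exact: bigmax_ge0.
have CD0 : 0 <= Cc * D0 by apply: mulr_ge0 => //; exact: Cc_ge0.
rewrite /config_diam; apply: bigmax_le => // p _; apply: bigmax_le => // q _.
set w := x (t0 + T) p - x (t0 + T) q.
have N0 : (0 < N)%N by apply: leq_trans hN.
have [a0 ha0] := argmax_ex (fun j => yw w j t0) N0.
have [b0 hb0] := argmax_ex (fun j => - yw w j t0) N0.
have hlh : forall j, yw w b0 t0 <= yw w j t0 <= yw w a0 t0.
  by move=> j; rewrite ha0 andbT -lerN2; exact: hb0.
have st := @step1D R N (yw w) AA M mlo mhi T mu t0 (yw w b0 t0) (yw w a0 t0)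
  N0 (@AA_ge0) (sys_w w) (@AA_bnd) (@AA_hi) (@AA_lo)
  (fun i j s hs => (andP (hMrange i j hs)).1)
  (fun i j => M_int i j t00) (fun i j => PE_int i j t00)
  t00 hT mlo_gt0 mhi_ge0 (ltW hmu) hlh p q.
have eC : 1 - 2^-1 * (expR (- (2 * ((N%:R - 1) * (mhi / N%:R)) * T)) *
     (mlo * mu * T / (N%:R + mlo * mu * T))) = Cc.
  rewrite /Cc.
  have -> : expR (- (2 * ((N%:R - 1) * (mhi / N%:R)) * T)) =
            expR (- (2 * ((N%:R - 1) / N%:R) * T * mhi)) by apply: congr1; ring.
  ring.
rewrite eC in st.
have lhs : yw w p (t0 + T) - yw w q (t0 + T) = enorm w ^+ 2.
  by rewrite /yw -dot_subl enorm_sq.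
have rhs : yw w a0 t0 - yw w b0 t0 <= D0 * enorm w.
  rewrite /yw -dot_subl; apply: (le_trans (CS _ _)); apply: ler_wpM2r; first exact: enorm_ge0.
  exact: le_diam.
rewrite lhs in st.
have st2 : enorm w ^+ 2 <= Cc * (D0 * enorm w).
  apply: (le_trans st); apply: ler_wpM2l => //; exact: Cc_ge0.
have [e0|epos] := eqVneq (enorm w) 0; first by rewrite e0.
have ep : 0 < enorm w by rewrite lt0r epos enorm_ge0.
by move: st2; rewrite mulrA expr2 ler_pM2r.
Qed.

Lemma main_result (n : nat) : config_diam (x (n%:R * T)) <= Cc ^+ n * config_diam (x 0).
Proof.
elim: n => [|n IH]; first by rewrite mul0r expr0 mul1r.
have nT : 0 <= n%:R * T by apply: mulr_ge0 => //; exact: ltW.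
have -> : n.+1%:R * T = n%:R * T + T by rewrite mulrSr mulrDl mul1r.
apply: (le_trans (step_d nT)); rewrite exprS -mulrA; apply: ler_wpM2l => //; exact: Cc_ge0.
Qed.

End Main.

Unset Implicit Arguments.

Theorem corollary2 (R : realType) (N d : nat) (hN : (2 <= N)%N) (hd : (1 <= d)%N)
  (M : 'I_N -> 'I_N -> R -> R)
  (lam : 'I_N -> config R N d -> R)
  (phi : 'I_N -> 'I_N -> 'rV[R]_d -> 'rV[R]_d -> R)
  (x : R -> config R N d)
  (mlo mhi T mu : R)
  (hMmeas : forall i j, measurable_fun (`[0, +oo[ : set R) (M i j))
  (hMrange : forall i j t, 0 <= t -> 0 <= M i j t <= 1)
  (hlamL : forall i, lipschitz_config (lam i))
  (hlampos : forall i y, 0 < lam i y)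
  (hphiL : forall i j, lipschitz_pair (phi i j))
  (hphipos : forall i j a b, 0 < phi i j a b)
  (hsol : caratheodory_solution lam phi M x)
  (hmlo_lb : forall i j (y : config R N d), (forall k, enorm (y k) <= config_radius (x 0)) ->
      mlo <= lam i y * phi i j (y i) (y j))
  (hmlo_att : exists i j (y : config R N d), (forall k, enorm (y k) <= config_radius (x 0)) /\
      lam i y * phi i j (y i) (y j) = mlo)
  (hmhi_ub : forall i j (y : config R N d), (forall k, enorm (y k) <= config_radius (x 0)) ->
      lam i y * phi i j (y i) (y j) <= mhi)
  (hmhi_att : exists i j (y : config R N d), (forall k, enorm (y k) <= config_radius (x 0)) /\
      lam i y * phi i j (y i) (y j) = mhi)
  (hT : 0 < T) (hmu : 0 < mu)
  (hPE : forall i j t, 0 <= t ->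
      T^-1 * Rintegral lebesgue_measure `[t, t + T] (M i j) >= mu) :
  forall n : nat,
    config_diam (x (n%:R * T)) <=
    (1 - 2^-1 * (mlo * mu * T / (N%:R + mlo * mu * T))
         * expR (- (2 * ((N%:R - 1) / N%:R) * T * mhi))) ^+ n * config_diam (x 0).
Proof.
move=> n.
exact: (@main_result R N d hN M lam phi x mlo mhi T mu hMmeas hMrange hlamL hlampos hphiL hphipos hsol
  hmlo_lb hmlo_att hmhi_ub hmhi_att hT hmu hPE n).
Qed.
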